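(* Let $\alpha=a_1\cdots a_n\neq (k-1)^n$ be a bracelet over $\{0,\dots,k-1\}$ and let $j$ be the index of the last symbol of $\alpha$ different from $k-1$. Then $\mathrm{LastNonMax}(\alpha)=a_1\cdots a_{j-1}(a_j+1)(k-1)^{n-j}$ is a bracelet.
   Context: Let $\Sigma=\{0,1,\dots,k-1\}$, $k\ge 2$. Strings are compared lexicographically ($\alpha<\beta$ if $\alpha$ is a proper prefix of $\beta$, or $\alpha$ has the smaller symbol at the first index where they differ). For $\alpha=a_1\cdots a_n$, $\alpha^R=a_n\cdots a_1$; $[\alpha]$ is the set of rotations of $\alpha$. $\alpha$ is a bracelet if it is the lexicographically smallest element of $[\alpha]\cup[\alpha^R]$. *)

(* Defs.v *)
From mathcomp Require Import all_boot.
Set Implicit Arguments. Unset Strict Implicit. Unset Printing Implicit Defensive.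

Definition is_string (k : nat) (s : seq nat) : bool := all (fun a => a < k) s.

Fixpoint lex_lt (s t : seq nat) : bool :=
  match s, t with
  | [::], [::] => false
  | [::], _ :: _ => true
  | _ :: _, [::] => false
  | a :: s', b :: t' => (a < b) || ((a == b) && lex_lt s' t')
  end.
Definition lex_le (s t : seq nat) : bool := (s == t) || lex_lt s t.

Definition bracelet (s : seq nat) : Prop :=
  forall i, i < size s -> lex_le s (rot i s) /\ lex_le s (rot i (rev s)).

(* index (1-based, as in the paper) of the last symbol different from k-1;
   here computed 0-based: j0 = j - 1. *)
Definition last_nonmax_index (k : nat) (s : seq nat) : nat :=
  size s - (find (fun a => a != k.-1) (rev s)).+1.

Definition LastNonMax (k : nat) (s : seq nat) : seq nat :=
  let j0 := last_nonmax_index k s in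
  take j0 s ++ (nth 0 s j0).+1 :: nseq (size s - j0.+1) k.-1.

(* Main.v *)
Require Import Defs.
From mathcomp Require Import all_boot zify.
Set Implicit Arguments. Unset Strict Implicit. Unset Printing Implicit Defensive.

Lemma lex_lt_cat u v X Y : size u = size v ->
  lex_lt (u ++ X) (v ++ Y) = lex_lt u v || ((u == v) && lex_lt X Y).
Proof.
elim: u v => [|a u IH] [|b v] //= [Hs].
rewrite IH // eqseq_cons.
by case: (a < b); case: (a == b); case: (lex_lt u v); case: (u == v).
Qed.

Lemma lex_le_cat u v X Y : size u = size v ->
  lex_le (u ++ X) (v ++ Y) = lex_lt u v || ((u == v) && lex_le X Y).
Proof.
move=> Hs; rewrite /lex_le lex_lt_cat // eqseq_cat //.
by case: (u == v); case: (X == Y); case: (lex_lt u v); case: (lex_lt X Y).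
Qed.

Lemma lex_le_refl s : lex_le s s.
Proof. by rewrite /lex_le eqxx. Qed.

Lemma lex_lt_le s t : lex_lt s t -> lex_le s t.
Proof. by rewrite /lex_le => ->; rewrite orbT. Qed.

Lemma lex_le_head x y s t : lex_le (x :: s) (y :: t) -> x <= y.
Proof.
rewrite /lex_le /= eqseq_cons.
case/orP => [/andP[/eqP-> _]//|/orP[/ltnW//|/andP[/eqP-> _]//]].
Qed.

Lemma lex_le_tail x s t : lex_le (x :: s) (x :: t) -> lex_le s t.
Proof.
rewrite /lex_le /= eqseq_cons eqxx ltnn /=.
by case/orP => ->; rewrite ?orbT.
Qed.

Lemma lt_head s t : 0 < size s -> 0 < size t -> nth 0 s 0 < nth 0 t 0 -> lex_lt s t.
Proof. by case: s => [|x s] // _; case: t => [|y t] //= _ ->. Qed.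

Lemma G1 u v i i' : size v = size u -> lex_le v u -> i < size u -> i < i' ->
  lex_lt (incr_nth v i') (incr_nth u i).
Proof.
elim: u v i i' => [|a u IH] [|b v] i [|i'] //= [Hs] Hle Hi Hii.
have Hba := lex_le_head Hle.
case: i Hi Hii => [|i] Hi Hii /=; first by rewrite ltnS Hba.
move: Hle; rewrite leq_eqVlt in Hba; case/orP: Hba => [/eqP Eb|->//].
subst b; move/lex_le_tail => Hle; rewrite eqxx ltnn /=.
exact: IH.
Qed.

Lemma G1' u v i : size v = size u -> lex_le v u -> i < size u ->
  lex_lt v (incr_nth u i).
Proof.
elim: u v i => [|a u IH] [|b v] i //= [Hs] Hle Hi.
have Hba := lex_le_head Hle.
case: i Hi => [|i] Hi /=; first by rewrite ltnS Hba.
move: Hle; rewrite leq_eqVlt in Hba; case/orP: Hba => [/eqP Eb|->//].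
subst b; move/lex_le_tail => Hle; rewrite eqxx ltnn /=.
exact: IH.
Qed.

Lemma G2 u v i : size v = size u -> lex_le v u -> i < size u ->
  lex_le (incr_nth v i) (incr_nth u i).
Proof.
elim: u v i => [|a u IH] [|b v] i //= [Hs] Hle Hi.
have Hba := lex_le_head Hle.
move: Hle; rewrite leq_eqVlt in Hba; case/orP: Hba => [/eqP Eb|Hlt].
  subst b; move/lex_le_tail => Hle.
  case: i Hi => [|i] Hi /=.
    move: Hle; rewrite /lex_le /= eqseq_cons eqxx ltnn /=.
    by case/orP=> ->; rewrite ?orbT.
  have := IH _ _ Hs Hle Hi.
  rewrite /lex_le /= eqseq_cons eqxx ltnn /=.
  by case/orP=> ->; rewrite ?orbT.
move=> _; apply: lex_lt_le.
by case: i Hi => [|i] _ /=; rewrite ?ltnS Hlt.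
Qed.

Lemma take_incr s L i : i < size s ->
  take L (incr_nth s i) = if i < L then incr_nth (take L s) i else take L s.
Proof.
elim: s L i => [|x s IH] L i //= Hi.
case: L => [|L]; case: i Hi => [|i] Hi //=.
by rewrite IH // ltnS; case: ifP.
Qed.

Lemma drop_incr s r i : r <= i -> i < size s ->
  drop r (incr_nth s i) = incr_nth (drop r s) (i - r).
Proof.
elim: r s i => [|r IH] s i Hr Hi; first by rewrite subn0 !drop0.
case: s Hi => [|x s] Hi //; case: i Hr Hi => [|i] Hr Hi //=.
by rewrite IH // subSS.
Qed.

Lemma incr_cat p a M : incr_nth (p ++ a :: M) (size p) = p ++ a.+1 :: M.
Proof. by elim: p => [|x p IH] //=; rewrite IH. Qed.

Lemma rcons_nseq t (m : nat) : rcons (nseq t m) m = nseq t.+1 m.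
Proof. by elim: t => //= t ->. Qed.

Lemma decomp (m : nat) s : s != nseq (size s) m ->
  exists p a t, s = p ++ a :: nseq t m /\ a != m.
Proof.
elim/last_ind: s => [|s x IH] //.
case: (eqVneq x m) => [Ex|Nx] H.
  subst x; have Hs : s != nseq (size s) m.
    by apply: contra H => /eqP Es; rewrite size_rcons -rcons_nseq -Es.
  have [p [a [t [Es Na]]]] := IH Hs.
  by exists p, a, t.+1; rewrite Es rcons_cat rcons_cons rcons_nseq.
by exists s, x, 0; rewrite -cats1.
Qed.

Lemma rev_form p a t (m : nat) : rev (p ++ a :: nseq t m) = nseq t m ++ a :: rev p.
Proof. by rewrite rev_cat rev_cons rev_nseq cat_rcons. Qed.

Lemma LNM_form k p a t : a != k.-1 ->
  LastNonMax k (p ++ a :: nseq t k.-1) = p ++ a.+1 :: nseq t k.-1.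
Proof.
move=> Na.
have Hi : last_nonmax_index k (p ++ a :: nseq t k.-1) = size p.
  rewrite /last_nonmax_index rev_form find_cat has_nseq /= eqxx andbF Na size_nseq.
  by rewrite addn0 size_cat /= size_nseq addnK.
rewrite /LastNonMax Hi take_size_cat // nth_cat ltnn subnn /=.
by rewrite size_cat /= size_nseq addnS -addSn addKn.
Qed.

Lemma rot_form p t (m x : nat) s : s < size p ->
  rot (t.+1 + s) (nseq t m ++ x :: rev p) =
  rev (take (size p - s) p) ++ (nseq t m ++ x :: rev (drop (size p - s) p)).
Proof.
move=> Hs.
rewrite addnC rotD; last by rewrite size_cat /= size_nseq size_rev; lia.
have -> : nseq t m ++ x :: rev p = rcons (nseq t m) x ++ rev p by rewrite cat_rcons.
have -> : t.+1 = size (rcons (nseq t m) x) by rewrite size_rcons size_nseq.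
rewrite rot_size_cat.
rewrite /rot drop_cat take_cat size_rev Hs drop_rev take_rev -catA cat_rcons.
by [].
Qed.

Lemma nth_rot0 s i : i < size s -> nth 0 (rot i s) 0 = nth 0 s i.
Proof. by move=> H; rewrite /rot nth_cat size_drop subn_gt0 H nth_drop addn0. Qed.

Lemma le_nseq (m : nat) w : all (fun x => x <= m) w -> lex_le w (nseq (size w) m).
Proof.
elim: w => [|x w IH] /=; first by move=> _; apply: lex_le_refl.
case/andP=> Hx /IH Hw; rewrite leq_eqVlt in Hx; case/orP: Hx => [/eqP->|Hx].
  move: Hw; rewrite /lex_le /= eqseq_cons eqxx ltnn /=.
  by case/orP => ->; rewrite ?orbT.
by apply: lex_lt_le; rewrite /= Hx.
Qed.

Lemma nseq_mid (m : nat) x y : nseq x m ++ m :: nseq y m = nseq (x + y).+1 m.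
Proof. by elim: x => //= x ->. Qed.

Lemma W (m : nat) w a t : all (fun x => x <= m) w -> a < m ->
  lex_le (w ++ a :: nseq t m) (nseq t m ++ a :: rev w) ->
  lex_le (w ++ a.+1 :: nseq t m) (nseq t m ++ a.+1 :: rev w).
Proof.
move=> Hw Ha H.
have Hsz : size (nseq t m ++ a :: rev w) = size (w ++ a :: nseq t m).
  by rewrite !size_cat /= size_nseq size_rev; lia.
have E1 := incr_cat (nseq t m) a (rev w); rewrite size_nseq in E1.
case: (ltngtP t (size w)) => Ht.
- apply: lex_lt_le.
  rewrite -E1 -incr_cat.
  by apply: G1 => //; rewrite ?Hsz // size_cat /= size_nseq; lia.
- have Et : nseq t m = nseq (size w) m ++ nseq (t - size w) m.
    by rewrite -nseqD subnKC // ltnW.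
  rewrite {2}Et -catA lex_le_cat ?size_nseq //.
  have /orP[/eqP Ew|->//] := le_nseq Hw.
  have Er : rev w = nseq (size w) m by rewrite {1}Ew rev_nseq.
  have -> : (w == nseq (size w) m) = true by apply/eqP.
  rewrite Er andTb; apply/orP; right.
  case E: (t - size w) => [|e]; first by move: Ht; rewrite -subn_gt0 E.
  rewrite leq_eqVlt in Ha; case/orP: Ha => [/eqP Ea|Ha].
    rewrite -Ea /= nseq_mid.
    have -> : (e + size w).+1 = t by move: E Ht; lia.
    exact: lex_le_refl.
  by apply: lex_lt_le; rewrite /= Ha.
- rewrite -E1 -incr_cat -Ht.
  by apply: G2 => //; rewrite ?Hsz // size_cat /= size_nseq; lia.
Qed.

Lemma rot_nseq i n (x : nat) : rot i (nseq n x) = nseq n x.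
Proof.
case: (leqP n i) => H; first by rewrite rot_oversize // size_nseq.
rewrite /rot drop_nseq take_nseq ?(ltnW H) // -nseqD; congr nseq; lia.
Qed.

Theorem mainTheorem4 (k : nat) (alpha : seq nat) :
  2 <= k ->
  is_string k alpha ->
  alpha != nseq (size alpha) k.-1 ->
  bracelet alpha ->
  bracelet (LastNonMax k alpha).
Proof.
move=> Hk Hs Hn Hb.
have [p [a [t [Ea Na]]]] := decomp Hn.
set m := k.-1 in Na Ea *.
have Hall : all (fun x => x <= m) alpha.
  by apply: sub_all Hs => x /= Hx; rewrite /m; lia.
have Hp : all (fun x => x <= m) p by move: Hall; rewrite Ea all_cat => /andP[].
have Ha : a < m.
  move: Hall; rewrite Ea all_cat /= => /and3P[_ H _].
  by rewrite ltn_neqAle Na H.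
rewrite Ea LNM_form //.
set M := nseq t m.
rewrite Ea in Hb.
set al := p ++ a :: M in Hb.
set be := p ++ a.+1 :: M.
have Eb : be = incr_nth al (size p) by rewrite incr_cat.
have Hsa : size al = size p + t.+1 by rewrite size_cat /= size_nseq.
have Hsb : size be = size p + t.+1 by rewrite size_cat /= size_nseq.
have hx : forall x p', p = x :: p' -> x <= a.
  move=> x p' Ep.
  have [H _] := Hb (size p) ltac:(rewrite Hsa; lia).
  move: H; rewrite /al rot_size_cat Ep /=.
  exact: lex_le_head.
case: (boolP ((p == [::]) && (a.+1 == m))) => [/andP[/eqP Ep /eqP Eam]|Hns].
  have -> : be = nseq t.+1 m by rewrite /be Ep Eam.
  move=> i _; rewrite rev_nseq rot_nseq; split; exact: lex_le_refl.
have hb0 : nth 0 be 0 < m.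
  rewrite /be; move: Hp Hns hx; case: (p) => [|x p'] /= Hp Hns hx.
    by rewrite ltn_neqAle Hns Ha.
  by apply: (leq_ltn_trans (hx _ _ erefl)).
move=> i; rewrite Hsb => Hi.
have [Hb1 Hb2] := Hb i ltac:(by rewrite Hsa).
split.
-
  case: (posnP i) => [->|Hi0]; first by rewrite rot0; exact: lex_le_refl.
  case: (leqP i (size p)) => Hip; last first.
    apply: lex_lt_le; apply: lt_head.
    + rewrite Hsb; lia.
    + rewrite size_rot Hsb; lia.
    rewrite nth_rot0 ?Hsb //.
    suff -> : nth 0 be i = m by [].
    rewrite /be nth_cat ltnNge (ltnW Hip) /=.
    case E: (i - size p) => [|j]; first by move: Hip; rewrite -subn_gt0 E.
    by rewrite /= nth_nseq; have -> : j < t by lia.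
  set n := size p + t.+1.
  have Hv : lex_le (take (n - i) al) (drop i al).
    move: Hb1; rewrite -{1}(cat_take_drop (n - i) al) /rot lex_le_cat;
      last by rewrite size_take size_drop Hsa; case: ifP; lia.
    case/orP => [/lex_lt_le //|/andP[/eqP -> _]]; exact: lex_le_refl.
  apply: lex_lt_le.
  rewrite -{1}(cat_take_drop (n - i) be) /rot lex_lt_cat;
    last by rewrite size_take size_drop Hsb; case: ifP; lia.
  apply/orP; left.
  rewrite Eb drop_incr ?Hsa; try lia.
  rewrite take_incr ?Hsa; last lia.
  have Hsz : size (take (n - i) al) = size (drop i al).
    by rewrite size_take size_drop Hsa; case: ifP; lia.
  case: ifP => _.
  + apply: G1 => //; rewrite ?size_drop ?Hsa; lia.
  + apply: G1' => //; rewrite ?size_drop ?Hsa; lia.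
-
  move: Hb2; rewrite /al /be !rev_form.
  case: (ltngtP i t) => Hit.
  + move=> _; apply: lex_lt_le; apply: lt_head.
    * rewrite size_cat /=; lia.
    * by rewrite size_rot size_cat /= size_nseq; lia.
    rewrite nth_rot0; last by rewrite size_cat /= size_nseq; lia.
    apply: (leq_trans hb0); rewrite /M nth_cat size_nseq Hit nth_nseq Hit //.
  + have -> : i = t.+1 + (i - t.+1) by lia.
    rewrite !rot_form; try lia.
    set l := size p - (i - t.+1).
    have E1 : forall b, p ++ b :: M = take l p ++ (drop l p ++ b :: M).
      by move=> b; rewrite catA cat_take_drop.
    rewrite !E1 !(@lex_le_cat (take l p) (rev (take l p))) ?size_rev //.
    case/orP => [->//|/andP[E H]]; rewrite E /=; apply/orP; right.
    by apply: W => //; apply/allP => x /mem_drop Hx; exact: (allP Hp).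
  + move=> _; rewrite Hit.
    rewrite -{1}(size_nseq t m) rot_size_cat /=.
    move: hx; case: (p) => [|x p'] hx; first exact: lex_le_refl.
    by apply: lex_lt_le; rewrite /= ltnS (hx x p' erefl).
Qed.

Print Assumptions mainTheorem4.
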